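(* Let $\{f_i\}_{i\in I}$ be a Parseval frame for a Hilbert space $\mathbb H$, let $J\subset I$, $J^c=I\setminus J$, and $f\in\mathbb H$. The following are equivalent: (i) $\sum_{i\in J}|\langle f,f_i\rangle|^2=\|\sum_{i\in J}\langle f,f_i\rangle f_i\|^2$; (ii) $\sum_{i\in J^c}|\langle f,f_i\rangle|^2=\|\sum_{i\in J^c}\langle f,f_i\rangle f_i\|^2$; (iii) $\sum_{i\in J}\langle f,f_i\rangle f_i\perp\sum_{i\in J^c}\langle f,f_i\rangle f_i$; (iv) $f\perp S_JS_{J^c}f$; (v) $S_Jf=S_J^2f$; (vi) $S_JS_{J^c}f=0$.
   Context: A family $\{f_i\}_{i\in I}$ in a Hilbert space $\mathbb H$ is a Parseval frame if $\sum_{i\in I}|\langle f,f_i\rangle|^2=\|f\|^2$ for all $f\in\mathbb H$. For $J\subset I$, $S_Jf=\sum_{i\in J}\langle f,f_i\rangle f_i$. *)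

(* Defs.v *)
From HB Require Import structures.
From mathcomp Require Import all_boot all_order all_algebra.
From mathcomp Require Import all_classical all_reals all_analysis.
From mathcomp Require Import complex finmap.
Import Order.TTheory GRing.Theory Num.Theory.
Import numFieldNormedType.Exports.

Set Implicit Arguments.
Unset Strict Implicit.
Unset Printing Implicit Defensive.

Local Open Scope classical_set_scope.
Local Open Scope ring_scope.

(* The filter of finite subsets of I ordered by inclusion ("eventually
   contains every given finite set"): the net used for unordered sums. *)
Definition totally {I : choiceType} : set_system {fset I} :=
  filter_from setT (fun A => [set B | (A `<=` B)%fset]).

Instance totally_filter {I : choiceType} : ProperFilter (@totally I).
Proof.
eapply filter_from_proper; last by move=> A _; exists A; rewrite /= fsubset_refl.
apply: filter_fromT_filter; first by exists fset0.
by move=> A B /=; exists (A `|` B)%fset => P /=; rewrite fsubUset => /andP[].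
Qed.

Definition psum {I : choiceType} {V : zmodType} (J : set I) (x : I -> V)
  (F : {fset I}) : V := \sum_(i <- F | `[< J i >]) x i.

Definition has_sum {I : choiceType} {K : numDomainType} {V : normedModType K}
  (J : set I) (x : I -> V) (s : V) : Prop := psum J x @ totally --> s.

Definition fsum {I : choiceType} {K : numDomainType} {V : normedModType K}
  (J : set I) (x : I -> V) : V := lim (psum J x @ totally).

(* ip is an inner product on V (linear in the first argument, conjugate
   symmetric) inducing the norm of V: |x|^2 = <x,x>.  Together with
   completeness of V this makes V a complex Hilbert space. *)
Definition inner_product {R : realType} {V : normedModType R[i]}
  (ip : V -> V -> R[i]) : Prop :=
  [/\ forall (a : R[i]) (x y z : V), ip (a *: x + y) z = a * ip x z + ip y z,
      forall x y : V, ip x y = (ip y x)^*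
    & forall x : V, `|x| ^+ 2 = ip x x].

Definition parseval_frame {R : realType} {V : normedModType R[i]}
  (ip : V -> V -> R[i]) {I : choiceType} (f : I -> V) : Prop :=
  forall g : V,
    @has_sum I R[i] R[i]^o setT (fun i => `|ip g (f i)| ^+ 2) (`|g| ^+ 2).

Definition frameop {R : realType} {V : normedModType R[i]}
  (ip : V -> V -> R[i]) {I : choiceType} (f : I -> V) (J : set I) (g : V) : V :=
  fsum J (fun i => ip g (f i) *: f i).

(* Main.v *)
Require Import Defs.
From HB Require Import structures.
From mathcomp Require Import all_boot all_order all_algebra.
From mathcomp Require Import all_classical all_reals all_analysis.
From mathcomp Require Import complex finmap.
From mathcomp Require Import ring.
Import Order.TTheory GRing.Theory Num.Theory.
Import numFieldNormedType.Exports.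
Local Open Scope classical_set_scope.
Local Open Scope ring_scope.
Section Sesq.
Variables (R : realType) (V : lmodType R[i]) (B : V -> V -> R[i]).
Hypothesis BL : forall (a : R[i]) (x y z : V), B (a *: x + y) z = a * B x z + B y z.
Hypothesis BS : forall x y : V, B x y = (B y x)^*.

Lemma B0l z : B 0 z = 0.
Proof.
have := BL 1 0 0 z; rewrite scale1r addr0 mul1r => h.
by apply: (addrI (B 0 z)); rewrite addr0 -h.
Qed.
Lemma BDl x y z : B (x + y) z = B x z + B y z.
Proof. by rewrite -[x]scale1r BL mul1r scale1r. Qed.
Lemma BZl a x z : B (a *: x) z = a * B x z.
Proof. by rewrite -[a *: x]addr0 BL B0l addr0. Qed.
Lemma BDr x y z : B z (x + y) = B z x + B z y.
Proof. by rewrite BS BDl rmorphD /= -!BS. Qed.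
Lemma BZr a x z : B z (a *: x) = a^* * B z x.
Proof. by rewrite BS BZl rmorphM /= -BS. Qed.

Lemma Bexp x z a : B (x + a *: z) (x + a *: z) =
  B x x + a^* * B x z + a * B z x + a * a^* * B z z.
Proof.
rewrite BDl !BDr BZl !BZr BZl.
by rewrite (mulrC a) -mulrA; ring.
Qed.

Lemma polar x z : B x z *+ 4 =
  B (x + 1 *: z) (x + 1 *: z) - B (x + (-1) *: z) (x + (-1) *: z)
  + 'i * B (x + 'i *: z) (x + 'i *: z) - 'i * B (x + (- 'i) *: z) (x + (- 'i) *: z).
Proof.
rewrite !Bexp rmorph1 rmorphN1 rmorphN /= conjCi opprK.
have h : 'i * 'i = -1 :> R[i] by rewrite -expr2 sqrCi.
set b1 := B x z; set b2 := B z x; set b3 := B z z; set b0 := B x x.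
have -> : b1 *+ 4 = b1 * 4 by rewrite mulr_natr.
transitivity ( b1 * 4 + ('i * 'i + 1) * (b2 * 2 - b1 * 2) ).
  by rewrite h addNr mul0r addr0.
ring.
Qed.
End Sesq.
Section Sums.
Variables (I : choiceType).

Lemma psum_split {W : zmodType} (J : set I) (y : I -> W) (A G : {fset I}) :
  (A `<=` G)%fset ->
  psum J y G = psum J y A + psum J y [fset x in G | x \notin A]%fset.
Proof.
move=> AG; rewrite /psum (big_fsetIDcond _ (mem A)); congr (_ + _).
suff -> : [fset x in G | x \in A]%fset = A by [].
apply/fsetP => x; rewrite !inE; apply/andP/idP => [[]//|xA]; split=> //.
exact: (fsubsetP AG).
Qed.

Lemma psum_compl {W : zmodType} (J : set I) (y : I -> W) (G : {fset I}) :
  psum J y G + psum (~` J) y G = psum setT y G.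
Proof.
rewrite /psum [RHS](bigID (fun i => `[< J i >])) /=.
have T1 : `[< True >] = true by exact: asboolT.
by congr (_ + _); apply: eq_bigl => i; rewrite T1 //= asbool_neg.
Qed.

Lemma nonneg_lim {T} (F : set_system T) {FF : ProperFilter F} (R : realType)
  (u : T -> R[i]^o) (l : R[i]) :
  u @ F --> (l : R[i]^o) -> (\forall t \near F, 0 <= (u t : R[i])) -> 0 <= l.
Proof.
move=> ul pos.
have h1 : (fun t => `|u t| : R[i]^o) @ F --> (`|l| : R[i]^o) by exact: cvg_norm.
have h2 : (fun t => `|u t| : R[i]^o) @ F --> (l : R[i]^o).
  apply: cvg_trans ul; apply: near_eq_cvg; near=> t.
  by rewrite ger0_norm //; near: t.
have := norm_cvg_unique h1 h2 => <-.
exact: normr_ge0.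
Unshelve. all: by end_near.
Qed.

End Sums.
Lemma psum_le_lim (R : realType) (I : choiceType) J (u : I -> R[i]^o) s G :
  (forall i, 0 <= (u i : R[i])) -> @has_sum I R[i] R[i]^o J u s -> psum J u G <= s.
Proof.
move=> u0 hs; rewrite -subr_ge0.
have hc : (psum J u - (fun=> psum J u G)) @ totally --> (s - psum J u G : R[i]^o).
  exact: (cvgB hs (cvg_cst _)).
apply: (@nonneg_lim _ totally _ R _ _ hc).
exists G => // G' /= GG'.
have -> : (psum J u - (fun=> psum J u G)) G' = psum J u G' - psum J u G by [].
rewrite (@psum_split _ _ _ _ _ _ GG') addrAC subrr add0r.
by apply: sumr_ge0 => i _.
Qed.
Section Main.
Variables (R : realType) (V : completeNormedModType R[i]) (ip : V -> V -> R[i]).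
Hypothesis hip : inner_product ip.
Let BL : forall (a : R[i]) (x y z : V), ip (a *: x + y) z = a * ip x z + ip y z.
Proof. by case: hip. Qed.
Let BS : forall x y : V, ip x y = (ip y x)^*.
Proof. by case: hip. Qed.
Let NS : forall x : V, `|x| ^+ 2 = ip x x.
Proof. by case: hip. Qed.

Lemma ip_cvg {T} (F : set_system T) {FF : Filter F} (u : T -> V) x z :
  u @ F --> x -> (fun t => ip (u t) z : R[i]^o) @ F --> (ip x z : R[i]^o).
Proof.
move=> ux.
have Q : forall a : R[i], (fun t => ip (u t + a *: z) (u t + a *: z) : R[i]^o) @ F -->
    (ip (x + a *: z) (x + a *: z) : R[i]^o).
  move=> a; rewrite -NS; under eq_fun do rewrite -NS.
  under eq_fun do rewrite expr2. rewrite expr2.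
  by apply: cvgM; apply: cvg_norm; apply: cvgD => //; apply: cvg_cst.
have key : (fun t => ip (u t) z *+ 4 : R[i]^o) @ F --> (ip x z *+ 4 : R[i]^o).
  rewrite (@polar _ _ ip BL BS); under eq_fun do rewrite (@polar _ _ ip BL BS).
  apply: cvgB; [apply: cvgD; [apply: cvgB|]|].
  - exact: Q.
  - exact: Q.
  - by apply: cvgM; [apply: cvg_cst| exact: Q].
  - by apply: cvgM; [apply: cvg_cst| exact: Q].
have := cvgM (cvg_cst (4^-1 : R[i]^o)) key.
have h4 : (4 : R[i]) != 0 by rewrite pnatr_eq0.
have e : forall y : R[i], 4^-1 * (y *+ 4) = y.
  by move=> y; rewrite -[y *+ 4]mulr_natr mulrCA mulVf // mulr1.
move=> /(_ FF FF) H.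
have -> : (fun t => ip (u t) z : R[i]^o) = ((fun=> 4^-1) \* (fun t : T => ip (u t) z *+ 4))
  by apply/funext=> t; rewrite /= e.
by rewrite -[X in _ --> X](e (ip x z)).
Qed.

Variables (I : choiceType) (f : I -> V).
Hypothesis hf : parseval_frame ip f.

Let ip_suml (r : seq I) (P : pred I) (F : I -> V) z :
  ip (\sum_(i <- r | P i) F i) z = \sum_(i <- r | P i) ip (F i) z.
Proof. exact: (big_morph (fun x => ip x z) (fun x y => @BDl _ _ ip BL x y z) (@B0l _ _ ip BL z)). Qed.

Let sq_ge0 (z : R[i]) : 0 <= `|z| ^+ 2.
Proof. exact: exprn_ge0. Qed.

Lemma psum_bound h G :
  psum setT (fun i => `|ip h (f i)| ^+ 2) G <= `|h| ^+ 2.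
Proof.
exact: (@psum_le_lim R I setT _ _ G (fun i => sq_ge0 _) (hf h)).
Qed.

Lemma bessel (a : I -> R[i]) (G : {fset I}) (P : pred I) :
  `|\sum_(i <- G | P i) a i *: f i| ^+ 2 <= \sum_(i <- G | P i) `|a i| ^+ 2.
Proof.
set x := \sum_(i <- G | P i) a i *: f i.
have e1 : `|x| ^+ 2 = \sum_(i <- G | P i) a i * ip (f i) x.
  by rewrite NS {1}/x ip_suml; apply: eq_bigr => i _; rewrite (@BZl _ _ ip BL).
have e2 : `|x| ^+ 2 <= \sum_(i <- G | P i) `|a i| * `|ip x (f i)|.
  rewrite -[X in X <= _]ger0_norm; last by rewrite exprn_ge0.
  rewrite e1; apply: le_trans (ler_norm_sum _ _ _) _.
  by apply: ler_sum => i _; rewrite normrM [ip (f i) x]BS norm_conjC.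
have e3 : \sum_(i <- G | P i) `|ip x (f i)| ^+ 2 <= `|x| ^+ 2.
  apply: le_trans (psum_bound x G).
  rewrite /psum [X in _ <= X](bigID P) /=.
  have -> : \sum_(i <- G | `[< setT i >] && P i) `|ip x (f i)| ^+ 2 =
            \sum_(i <- G | P i) `|ip x (f i)| ^+ 2.
    by apply: eq_bigl => i; rewrite asboolT.
  by rewrite lerDl; apply: sumr_ge0 => i _; apply: sq_ge0.
have e4 : `|x| ^+ 2 *+ 2 <= \sum_(i <- G | P i) `|a i| ^+ 2 + `|x| ^+ 2.
  apply: le_trans (_ : (\sum_(i <- G | P i) `|a i| * `|ip x (f i)|) *+ 2 <= _).
    by rewrite lerMn2r.
  rewrite -sumrMnl; apply: le_trans (_ : \sum_(i <- G | P i)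
     (`|a i| ^+ 2 + `|ip x (f i)| ^+ 2) <= _).
    apply: ler_sum => i _.
    exact: (real_leif_mean_square_scaled (normr_real _) (normr_real _)).1.
  by rewrite big_split /= lerD2l.
by move: e4; rewrite mulr2n lerD2r.
Qed.


Lemma subsum_le (d : I -> R[i]) (G : {fset I}) (P : pred I) :
  (forall i, 0 <= d i) -> \sum_(i <- G | P i) d i <= psum setT d G.
Proof.
move=> d0; rewrite /psum [X in _ <= X](bigID P) /=.
have -> : \sum_(i <- G | `[< setT i >] && P i) d i = \sum_(i <- G | P i) d i.
  by apply: eq_bigl => i; rewrite asboolT.
by rewrite lerDl; apply: sumr_ge0 => i _.
Qed.

Lemma frame_cvg J h : has_sum J (fun i => ip h (f i) *: f i) (frameop ip f J h).
Proof.
set x := (fun i => _).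
apply: (cauchy_cvg (psum J x @ totally)).
apply: cauchy_exP => eps eps0.
set y := (fun i => `|ip h (f i)| ^+ 2).
have e0 : 0 < eps ^+ 2 / 2 by rewrite divr_gt0 // exprn_gt0.
have [A _ HA] := (cvgrPdist_lt _ _).1 (hf h) _ e0.
exists (psum J x A); exists A => // G /= AG.
rewrite -ball_normE /ball_ /= (@psum_split _ _ _ _ _ _ AG) opprD addrA subrr add0r normrN.
set rest := [fset _ in G | _]%fset.
rewrite -(@ltr_pXn2r _ 2) // ?nnegrE //; last exact: ltW.
apply: le_lt_trans (bessel _ _ _) _.
apply: le_lt_trans (subsum_le _ _ _ (fun i => sq_ge0 _)) _.
have HAA := HA A (fsubset_refl A); have HAG := HA G AG.
rewrite /= in HAA HAG.
rewrite -[X in X < _]ger0_norm; last by apply: sumr_ge0 => i _; exact: sq_ge0.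
have -> : psum setT (fun i => `|ip h (f i)| ^+ 2) rest =
   (`|h| ^+ 2 - psum setT y A) - (`|h| ^+ 2 - psum setT y G).
  by rewrite (@psum_split _ _ _ _ _ _ AG) /y; ring.
apply: le_lt_trans (ler_normB _ _) _.
by rewrite [eps ^+ 2]splitr ltrD.
Qed.

Lemma hs_unique J (u : I -> R[i]^o) s t :
  @has_sum I R[i] R[i]^o J u s -> has_sum J u t -> s = t.
Proof. by move=> hs ht; apply: norm_cvg_unique hs ht. Qed.

Lemma hsV_unique J (u : I -> V) s t :
  @has_sum I R[i] V J u s -> has_sum J u t -> s = t.
Proof. by move=> hs ht; apply: norm_cvg_unique hs ht. Qed.

Lemma hs_lim J (u : I -> R[i]^o) s :
  @has_sum I R[i] R[i]^o J u s -> fsum J u = s.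
Proof. by move=> hs; apply: norm_cvg_lim hs. Qed.

Lemma hs_conj J (u : I -> R[i]^o) s :
  @has_sum I R[i] R[i]^o J u s -> @has_sum I R[i] R[i]^o J (fun i => (u i)^*) s^*.
Proof.
move=> /cvgrPdist_lt hs; apply/cvgrPdist_lt => e e0.
have := hs e e0; apply: filterS => G.
by rewrite /psum -rmorph_sum /= -rmorphB /= norm_conjC.
Qed.

Lemma hs_nonneg J (u : I -> R[i]^o) s :
  (forall i, 0 <= (u i : R[i])) -> @has_sum I R[i] R[i]^o J u s -> 0 <= (s : R[i]).
Proof.
move=> u0 hs; apply: (@nonneg_lim _ totally _ R _ _ hs).
by apply: nearW => G; apply: sumr_ge0 => i _.
Qed.

Lemma ip_hs J h z : @has_sum I R[i] R[i]^o J
  (fun i => ip h (f i) * ip (f i) z) (ip (frameop ip f J h) z).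
Proof.
have := @ip_cvg _ totally _ (psum J (fun i => ip h (f i) *: f i)) _ z (frame_cvg J h).
rewrite /has_sum.
have -> : psum J (fun i => ip h (f i) * ip (f i) z : R[i]^o) =
   (fun G => ip (psum J (fun i => ip h (f i) *: f i) G) z : R[i]^o).
  apply/funext => G; rewrite /psum ip_suml; apply: eq_bigr => i _.
  by rewrite (@BZl _ _ ip BL).
by apply.
Qed.

Lemma sqnorm_hs J h : @has_sum I R[i] R[i]^o J
  (fun i => `|ip h (f i)| ^+ 2) (ip (frameop ip f J h) h).
Proof.
have := ip_hs J h h.
have -> : (fun i => ip h (f i) * ip (f i) h) = (fun i => `|ip h (f i)| ^+ 2).
  by apply/funext => i; rewrite normCK -BS.
by apply.
Qed.

Lemma S_adj J x y : ip (frameop ip f J x) y = (ip (frameop ip f J y) x)^*.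
Proof.
apply: (@hs_unique J _ _ _ (ip_hs J x y)).
have := @hs_conj J _ _ (ip_hs J y x).
have -> : (fun i => (ip y (f i) * ip (f i) x)^*) = (fun i => ip x (f i) * ip (f i) y).
  by apply/funext => i; rewrite rmorphM /= -!BS mulrC.
by apply.
Qed.


Lemma S_add J x y : frameop ip f J (x + y) = frameop ip f J x + frameop ip f J y.
Proof.
apply: (@hsV_unique J _ _ _ (frame_cvg J (x + y))).
rewrite /has_sum.
have -> : psum J (fun i => ip (x + y) (f i) *: f i) =
   (fun G => psum J (fun i => ip x (f i) *: f i) G + psum J (fun i => ip y (f i) *: f i) G).
  apply/funext => G; rewrite /psum /= -big_split; apply: eq_bigr => i _.
  by rewrite (@BDl _ _ ip BL) scalerDl.
by apply: cvgD; apply: frame_cvg.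
Qed.

Lemma cvg4 {T} (F : set_system T) {FF : Filter F} (v q1 q2 q3 q4 : T -> R[i]^o)
  (l l1 l2 l3 l4 : R[i]) :
  (forall t, v t *+ 4 = q1 t - q2 t + 'i * q3 t - 'i * q4 t) ->
  l *+ 4 = l1 - l2 + 'i * l3 - 'i * l4 ->
  q1 @ F --> (l1 : R[i]^o) -> q2 @ F --> (l2 : R[i]^o) ->
  q3 @ F --> (l3 : R[i]^o) -> q4 @ F --> (l4 : R[i]^o) -> v @ F --> (l : R[i]^o).
Proof.
move=> ev el c1 c2 c3 c4.
have key : (fun t => v t *+ 4 : R[i]^o) @ F --> (l *+ 4 : R[i]^o).
  rewrite el; under eq_fun do rewrite ev.
  apply: cvgB; [apply: cvgD; [apply: cvgB|]|].
  - exact: c1.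
  - exact: c2.
  - by apply: cvgM; [apply: cvg_cst| exact: c3].
  - by apply: cvgM; [apply: cvg_cst| exact: c4].
have := cvgM (cvg_cst (4^-1 : R[i]^o)) key.
have h4 : (4 : R[i]) != 0 by rewrite pnatr_eq0.
have e : forall y : R[i], 4^-1 * (y *+ 4) = y.
  by move=> y; rewrite -[y *+ 4]mulr_natr mulrCA mulVf // mulr1.
move=> /(_ FF FF) H.
have -> : v = ((fun=> 4^-1) \* (fun t : T => v t *+ 4))
  by apply/funext=> t; rewrite /= e.
by rewrite -[X in _ --> X](e l).
Qed.

Lemma ip_hs_gen J h z s : has_sum J (fun i => ip h (f i) *: f i) s ->
  @has_sum I R[i] R[i]^o J (fun i => ip h (f i) * ip (f i) z) (ip s z).
Proof.
move=> hs.
have := @ip_cvg _ totally _ (psum J (fun i => ip h (f i) *: f i)) _ z hs.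
rewrite /has_sum.
have -> : psum J (fun i => ip h (f i) * ip (f i) z : R[i]^o) =
   (fun G => ip (psum J (fun i => ip h (f i) *: f i) G) z : R[i]^o).
  apply/funext => G; rewrite /psum ip_suml; apply: eq_bigr => i _.
  by rewrite (@BZl _ _ ip BL).
by apply.
Qed.

Lemma parseval_polar h z : @has_sum I R[i] R[i]^o setT
  (fun i => ip h (f i) * ip (f i) z) (ip h z).
Proof.
pose Bi i := fun x y => ip x (f i) * ip (f i) y.
have BLi : forall i (a : R[i]) (x y z : V), Bi i (a *: x + y) z = a * Bi i x z + Bi i y z.
  by move=> i a x y w; rewrite /Bi BL mulrDl mulrA.
have BSi : forall i (x y : V), Bi i x y = (Bi i y x)^*.
  by move=> i x y; rewrite /Bi rmorphM /= -!BS mulrC.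
pose q (w : V) := psum setT (fun i => `|ip w (f i)| ^+ 2 : R[i]^o).
apply: (@cvg4 _ totally _ _ (q (h + 1 *: z)) (q (h + (-1) *: z))
   (q (h + 'i *: z)) (q (h + (- 'i) *: z)) _ (ip (h + 1 *: z) (h + 1 *: z))
   (ip (h + (-1) *: z) (h + (-1) *: z)) (ip (h + 'i *: z) (h + 'i *: z))
   (ip (h + (- 'i) *: z) (h + (- 'i) *: z))).
- move=> G; rewrite /q /psum -sumrMnl !mulr_sumr -sumrB -big_split -sumrB /=.
  apply: eq_bigr => i _; rewrite !normCK -!BS.
  exact: (@polar _ _ (Bi i) (BLi i) (BSi i) h z).
- exact: (@polar _ _ ip BL BS).
- by rewrite -NS; apply: hf.
- by rewrite -NS; apply: hf.
- by rewrite -NS; apply: hf.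
- by rewrite -NS; apply: hf.
Qed.

Lemma S_compl J h : frameop ip f J h + frameop ip f (~` J) h = h.
Proof.
set s := _ + _.
have hs : has_sum setT (fun i => ip h (f i) *: f i) s.
  rewrite /has_sum.
  have <- : (fun G => psum J (fun i => ip h (f i) *: f i) G +
     psum (~` J) (fun i => ip h (f i) *: f i) G) = psum setT (fun i => ip h (f i) *: f i).
    by apply/funext => G; rewrite /= psum_compl.
  by apply: cvgD; apply: frame_cvg.
have e : forall z, ip s z = ip h z.
  move=> z; apply: (@hs_unique setT _ _ _ (@ip_hs_gen setT h z s hs)).
  exact: parseval_polar.
have e' : forall z, ip (s - h) z = 0.
  by move=> z; rewrite (@BDl _ _ ip BL) -scaleN1r (@BZl _ _ ip BL) e mulN1r subrr.
have := e' (s - h).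
rewrite -NS => /eqP; rewrite expf_eq0 /= normr_eq0 subr_eq0 => /eqP.
done.
Qed.

Lemma main_tfae J g :
  [<-> @fsum I R[i] R[i]^o J (fun i => `|ip g (f i)| ^+ 2)
         = `|frameop ip f J g| ^+ 2;
       @fsum I R[i] R[i]^o (~` J) (fun i => `|ip g (f i)| ^+ 2)
         = `|frameop ip f (~` J) g| ^+ 2;
       ip (frameop ip f J g) (frameop ip f (~` J) g) = 0;
       ip g (frameop ip f J (frameop ip f (~` J) g)) = 0;
       frameop ip f J g = frameop ip f J (frameop ip f J g);
       frameop ip f J (frameop ip f (~` J) g) = 0].
Proof.
have ab : frameop ip f J g + frameop ip f (~` J) g = g := S_compl J g.
have F1 := @hs_lim J _ _ (sqnorm_hs J g).
have F2 := @hs_lim (~` J) _ _ (sqnorm_hs (~` J) g).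
have tg := S_adj J (frameop ip f (~` J) g) g.
have tb0 := @hs_nonneg J _ _ (fun i => sq_ge0 _) (sqnorm_hs J (frameop ip f (~` J) g)).
have ta2 := S_compl J (frameop ip f J g).
have tsplit := S_add J (frameop ip f J g) (frameop ip f (~` J) g).
set a := frameop ip f J g in ab F1 tg ta2 tsplit *.
set b := frameop ip f (~` J) g in ab F2 tg tb0 tsplit *.
set t := frameop ip f J b in tg tb0 tsplit *.
rewrite ab -/a in tsplit.
have tS : t = frameop ip f (~` J) a.
  by apply: (@addrI _ (frameop ip f J a)); rewrite -tsplit ta2.
have ta0 := @hs_nonneg (~` J) _ _ (fun i => sq_ge0 _) (sqnorm_hs (~` J) a).
rewrite -tS in ta0.
have BDr' := @BDr _ _ ip BL BS.
have ipag : ip a g = ip a a + ip a b by rewrite -[in LHS]ab BDr'.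
have ipbg : ip b g = ip b a + ip b b by rewrite -[in LHS]ab BDr'.
have tgs : ip t g = ip t a + ip t b by rewrite -[in LHS]ab BDr'.
have P0t : ip a b = 0 -> t = 0.
  move=> P0; have h1 : ip t b = 0.
    move: tg; rewrite P0 rmorph0 tgs => /eqP; rewrite paddr_eq0 // => /andP[_ /eqP] //.
  have hz : forall G, psum J (fun i => ip b (f i) *: f i) G = 0.
    move=> G; have h2 := bessel (fun i => ip b (f i)) G (fun i => `[< J i >]).
    have h3 := @psum_le_lim R I J _ _ G (fun i => sq_ge0 _) (sqnorm_hs J b).
    rewrite h1 in h3.
    have h4 : `|psum J (fun i => ip b (f i) *: f i) G| ^+ 2 = 0.
      apply/eqP; rewrite eq_le exprn_ge0 // andbT; exact: le_trans h2 h3.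
    by move: h4 => /eqP; rewrite expf_eq0 /= normr_eq0 => /eqP.
  apply: (@hsV_unique J _ _ _ (frame_cvg J b)).
  rewrite /has_sum (_ : psum J _ = fun=> 0); first exact: cvg_cst.
  by apply/funext => G; rewrite hz.
have E1 : fsum J (fun i => `|ip g (f i)| ^+ 2 : R[i]^o) = `|a| ^+ 2 <-> ip a b = 0.
  rewrite F1 NS ipag -{2}[ip a a]addr0; split => [/addrI|->] //.
have E2 : fsum (~` J) (fun i => `|ip g (f i)| ^+ 2 : R[i]^o) = `|b| ^+ 2 <-> ip a b = 0.
  rewrite F2 NS ipbg -{2}[ip b b]add0r [ip b a]BS; split => [h|->].
    move/addIr/eqP: h.
    by rewrite conjC_eq0 => /eqP.
  by rewrite rmorph0 add0r.
have E4 : ip g t = 0 <-> ip a b = 0.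
  by rewrite BS tg conjCK.
have E6 : t = 0 <-> ip a b = 0.
  split=> [t0|/P0t //]; move: tg; rewrite t0 (@B0l _ _ ip BL) => /esym/eqP.
  by rewrite conjC_eq0 => /eqP.
clearbody t.
have E5 : a = frameop ip f J a <-> t = 0.
  split=> [h|t0]; last by rewrite {1}tsplit t0 addr0.
  by apply: (@addrI _ (frameop ip f J a)); rewrite -tsplit addr0.
tfae=> [/E1/E2 //|/E2 //|/E4 //|/E4/E6/E5 //|/E5 //|/E6/E1 //].
Qed.
End Main.

Theorem theorem4p5 (R : realType) (V : completeNormedModType R[i])
  (ip : V -> V -> R[i]) (hip : inner_product ip)
  (I : choiceType) (f : I -> V) (hf : parseval_frame ip f)
  (J : set I) (g : V) :
  [<-> @fsum I R[i] R[i]^o J (fun i => `|ip g (f i)| ^+ 2)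
         = `|frameop ip f J g| ^+ 2;
       @fsum I R[i] R[i]^o (~` J) (fun i => `|ip g (f i)| ^+ 2)
         = `|frameop ip f (~` J) g| ^+ 2;
       ip (frameop ip f J g) (frameop ip f (~` J) g) = 0;
       ip g (frameop ip f J (frameop ip f (~` J) g)) = 0;
       frameop ip f J g = frameop ip f J (frameop ip f J g);
       frameop ip f J (frameop ip f (~` J) g) = 0].
Proof. exact: (@main_tfae R V ip hip I f hf J g). Qed.
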